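(* Let $0<a,b<1$, $f\ge3$, and let $q^*_n,w^*_n,\overline q_n$ be as in the context. Let $$Q(b):=\begin{bmatrix}q^*_1(b)&w^*_1(b)\\ q^*_2(b)&w^*_2(b)\end{bmatrix},\quad B:=\begin{bmatrix}\frac{b-a}{1-a}&\frac{1-b}{1-a}\\ \frac{b-a}{1-a}\beta(a,b)-x(a,b)&\frac{1-b}{1-a}\beta(a,b)\end{bmatrix},\quad M:=Q(b)^{-1}B.$$ Then for all $j\ge1$, $$\overline q_{f+j-1}=\begin{bmatrix}q^*_j(b)&w^*_j(b)\end{bmatrix}M\begin{bmatrix}q^*_{f-1}(a)\\ q^*_f(a)\end{bmatrix}.$$
   Context: Let $r,y,z$ be indeterminates. For $c\in(0,1)$: $\omega_c:=1-(1-c)^2r^2y^2z^2$, $\tau_c:=1+(1-c)^2r^2z^2y(1-y)$, $x_c:=c^2z^2\tau_c^2$, $\beta_c:=1+z^2(c^2-(1-c)^2r^2(y^2+c^2(1-y)^2z^2))$; $w^*_0(c):=(\beta_c-\omega_c)/x_c$, $w^*_1(c):=1$, $w^*_{n+1}(c):=\beta_cw^*_n(c)-x_cw^*_{n-1}(c)$ ($n\ge1$); $q^*_0(c):=-(1-y)(1+y+(1-c)^2r^2y^2z^2(1-y))/\tau_c^2$, $q^*_1(c):=y^2$, $q^*_{n+1}(c):=\beta_cq^*_n(c)-x_cq^*_{n-1}(c)$ ($n\ge1$). Also $\tau(a,b):=1+(1-a)(1-b)r^2z^2y(1-y)$, $x(a,b):=b^2z^2\tau(a,b)^2$, $\beta(a,b):=\beta_b-(b-a)b^2(1-b)r^2(1-y)^2z^4$.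 The sequence $\overline q_n$, $n\ge1$: $\overline q_n:=q^*_n(a)$ for $1\le n<f$; $\overline q_f:=\frac{1-b}{1-a}q^*_f(a)+\frac{b-a}{1-a}q^*_{f-1}(a)$; $\overline q_{f+1}:=\beta(a,b)\overline q_f-x(a,b)\overline q_{f-1}$; $\overline q_{f+j+1}:=\beta_b\overline q_{f+j}-x_b\overline q_{f+j-1}$ for $j\ge1$. *)

(* Defs.v *)
From HB Require Import structures.
From mathcomp Require Import all_boot all_order all_algebra.
From mathcomp Require Import fraction.
From mathcomp Require Import mpoly.
Set Implicit Arguments. Unset Strict Implicit. Unset Printing Implicit Defensive.
Import Order.TTheory GRing.Theory Num.Theory.
Local Open Scope ring_scope.

Section Rec.
Variable K : fieldType.
Fixpoint rec2p (be x u0 u1 : K) (n : nat) : K * K :=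
  match n with
  | 0 => (u0, u1)
  | n'.+1 => let p := rec2p be x u0 u1 n' in (p.2, be * p.2 - x * p.1)
  end.
Definition rec2 (be x u0 u1 : K) (n : nat) : K := (rec2p be x u0 u1 n).1.

Variables r y z : K.
Definition omega_c (c : K) := 1 - (1 - c) ^+ 2 * r ^+ 2 * y ^+ 2 * z ^+ 2.
Definition tau_c (c : K) := 1 + (1 - c) ^+ 2 * r ^+ 2 * z ^+ 2 * y * (1 - y).
Definition x_c (c : K) := c ^+ 2 * z ^+ 2 * (tau_c c) ^+ 2.
Definition beta_c (c : K) :=
  1 + z ^+ 2 * (c ^+ 2 - (1 - c) ^+ 2 * r ^+ 2 *
                 (y ^+ 2 + c ^+ 2 * (1 - y) ^+ 2 * z ^+ 2)).
Definition wstar (c : K) (n : nat) : K :=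
  rec2 (beta_c c) (x_c c) ((beta_c c - omega_c c) / x_c c) 1 n.
Definition qstar (c : K) (n : nat) : K :=
  rec2 (beta_c c) (x_c c)
    (- (1 - y) * (1 + y + (1 - c) ^+ 2 * r ^+ 2 * y ^+ 2 * z ^+ 2 * (1 - y))
       / (tau_c c) ^+ 2)
    (y ^+ 2) n.
Definition tau_ab (a b : K) := 1 + (1 - a) * (1 - b) * r ^+ 2 * z ^+ 2 * y * (1 - y).
Definition x_ab (a b : K) := b ^+ 2 * z ^+ 2 * (tau_ab a b) ^+ 2.
Definition beta_ab (a b : K) :=
  beta_c b - (b - a) * b ^+ 2 * (1 - b) * r ^+ 2 * (1 - y) ^+ 2 * z ^+ 4.

(* \overline q_n (meaningful for n >= 1). *)
Definition qbar (a b : K) (f : nat) (n : nat) : K :=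
  let qf := (1 - b) / (1 - a) * qstar a f + (b - a) / (1 - a) * qstar a f.-1 in
  let qf1 := beta_ab a b * qf - x_ab a b * qstar a f.-1 in
  if (n < f)%N then qstar a n else rec2 (beta_c b) (x_c b) qf qf1 (n - f).

Definition mx2 (p q s t : K) : 'M[K]_2 :=
  \matrix_(i < 2, j < 2)
    if i == 0 then (if j == 0 then p else q) else (if j == 0 then s else t).
Definition row2 (p q : K) : 'rV[K]_2 := \row_(j < 2) if j == 0 then p else q.
Definition col2 (p q : K) : 'cV[K]_2 := \col_(i < 2) if i == 0 then p else q.
End Rec.

Definition RF (R : realFieldType) := {fraction {mpoly R[3]}}.
Definition cst (R : realFieldType) (a : R) : RF R := tofrac (a%:MP).
Definition var_r (R : realFieldType) : RF R := tofrac ('X_(0 : 'I_3)).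
Definition var_y (R : realFieldType) : RF R := tofrac ('X_(1 : 'I_3)).
Definition var_z (R : realFieldType) : RF R := tofrac ('X_(2 : 'I_3)).

(* Main.v *)
Require Import Defs.
From HB Require Import structures.
From mathcomp Require Import all_boot all_order all_algebra.
From mathcomp Require Import fraction.
From mathcomp Require Import mpoly.
From mathcomp Require Import ring.
Import Order.TTheory GRing.Theory Num.Theory.
Local Open Scope ring_scope.

Section G.
Variable K : fieldType.
Lemma rec2S2 (be x u0 u1 : K) n :
  rec2 be x u0 u1 n.+2 = be * rec2 be x u0 u1 n.+1 - x * rec2 be x u0 u1 n.
Proof. by []. Qed.

Lemma rec_uniq (be x : K) (s t : nat -> K) :
  (forall n, s n.+2 = be * s n.+1 - x * s n) ->
  (forall n, t n.+2 = be * t n.+1 - x * t n) ->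
  s 0%N = t 0%N -> s 1%N = t 1%N -> forall n, s n = t n.
Proof.
move=> hs ht h0 h1.
suff H : forall n, s n = t n /\ s n.+1 = t n.+1 by move=> n; case: (H n).
elim=> [|n [e1 e2]]; first by split.
by split=> //; rewrite hs ht e1 e2.
Qed.

Lemma mx2_unit (p q s t : K) : p * t - q * s != 0 -> mx2 p q s t \in unitmx.
Proof.
move=> hD.
have [] := @mulmx1_unit _ _ (mx2 p q s t)
  (mx2 (t / (p*t - q*s)) (- q / (p*t - q*s)) (- s / (p*t - q*s)) (p / (p*t - q*s))) => //.
apply/matrixP=> i j; rewrite !mxE !big_ord_recr !big_ord0 /= !mxE.
case: i => [[|[|//]] ?]; case: j => [[|[|//]] ?] /=; field; exact: hD.
Qed.
End G.

Section N.
Variable R : realFieldType.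
Lemma nz_of_eval (P : {mpoly R[3]}) (v : 'I_3 -> R) : P.@[v] != 0 -> tofrac P != 0.
Proof. move=> h; rewrite tofrac_eq0; apply: contra_neq h => ->; by rewrite meval0. Qed.

Definition vv : 'I_3 -> R := fun i => if val i == 2%N then 1 else 0.

Lemma nz_tau (b : R) : tau_c (var_r R) (var_y R) (var_z R) (cst b) != 0.
Proof.
pose X0 : {mpoly R[3]} := 'X_(0 : 'I_3). pose X1 : {mpoly R[3]} := 'X_(1 : 'I_3).
pose X2 : {mpoly R[3]} := 'X_(2 : 'I_3). pose C : {mpoly R[3]} := b%:MP.
have -> : tau_c (var_r R) (var_y R) (var_z R) (cst b) =
  tofrac (1 + (1 - C) ^+ 2 * X0 ^+ 2 * X2 ^+ 2 * X1 * (1 - X1)).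
  by rewrite /tau_c !(tofracD, tofracB, tofracN, tofracM, tofracXn, tofrac1); rewrite /cst /var_r /var_y /var_z; ring.
About nz_of_eval. About vv. apply: (@nz_of_eval _ vv).
rewrite !expr2 !(mevalD, mevalB, mevalM, mevalN, mevalC, mevalXU, meval1) /vv /=.
by rewrite !(mul0r, mulr0, addr0) oner_neq0. Qed.
Lemma nz_cst (b : R) : 0 < b -> cst b != 0.
Proof. by move=> hb; rewrite /cst tofrac_eq0 mpolyC_eq0 lt0r_neq0. Qed.

Lemma nz_z : var_z R != 0.
Proof.
apply: (@nz_of_eval _ vv); rewrite mevalXU /vv /=; exact: oner_neq0.
Qed.

Lemma nz_x (b : R) : 0 < b -> x_c (var_r R) (var_y R) (var_z R) (cst b) != 0.
Proof.
move=> hb; rewrite /x_c; apply: mulf_neq0; first apply: mulf_neq0.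
- by apply: expf_neq0; exact: nz_cst.
- by apply: expf_neq0; exact: nz_z.
- by apply: expf_neq0; exact: nz_tau.
Qed.

Lemma nz_E (b : R) : 0 < b ->
  let r := var_r R in let y := var_y R in let z := var_z R in let c := cst b in
  is_true (c ^+ 2 * z ^+ 2 * (1 - y) * (1 + y + (1 - c) ^+ 2 * r ^+ 2 * y ^+ 2 * z ^+ 2 * (1 - y))
  + y ^+ 2 * (beta_c r y z c - omega_c r y z c) != 0).
Proof.
move=> hb r y z c.
pose X0 : {mpoly R[3]} := 'X_(0 : 'I_3). pose X1 : {mpoly R[3]} := 'X_(1 : 'I_3).
pose X2 : {mpoly R[3]} := 'X_(2 : 'I_3). pose C : {mpoly R[3]} := b%:MP.
have -> : c ^+ 2 * z ^+ 2 * (1 - y) * (1 + y + (1 - c) ^+ 2 * r ^+ 2 * y ^+ 2 * z ^+ 2 * (1 - y))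
  + y ^+ 2 * (beta_c r y z c - omega_c r y z c) = tofrac (
  C ^+ 2 * X2 ^+ 2 * (1 - X1) * (1 + X1 + (1 - C) ^+ 2 * X0 ^+ 2 * X1 ^+ 2 * X2 ^+ 2 * (1 - X1))
  + X1 ^+ 2 * ((1 + X2 ^+ 2 * (C ^+ 2 - (1 - C) ^+ 2 * X0 ^+ 2 *
                 (X1 ^+ 2 + C ^+ 2 * (1 - X1) ^+ 2 * X2 ^+ 2))) - (1 - (1 - C) ^+ 2 * X0 ^+ 2 * X1 ^+ 2 * X2 ^+ 2))).
  by rewrite /beta_c /omega_c !(tofracD, tofracB, tofracN, tofracM, tofracXn, tofrac1); rewrite /c /r /y /z /cst /var_r /var_y /var_z; ring.
apply: (@nz_of_eval _ vv).
rewrite [X in X != 0](_ : _ = b * b); first by rewrite mulf_neq0 // lt0r_neq0.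
rewrite !expr2 !(mevalD, mevalB, mevalM, mevalN, mevalC, mevalXU, meval1) /vv /=.
ring.
Qed.
End N.

Lemma det_gen (K : fieldType) (r y z c : K) :
  tau_c r y z c != 0 -> c != 0 -> z != 0 ->
  qstar r y z c 1 * wstar r y z c 2 - wstar r y z c 1 * qstar r y z c 2 =
  - (c ^+ 2 * z ^+ 2 * (1 - y) * (1 + y + (1 - c) ^+ 2 * r ^+ 2 * y ^+ 2 * z ^+ 2 * (1 - y))
  + y ^+ 2 * (beta_c r y z c - omega_c r y z c)).
Proof.
move=> hT hc hz.
rewrite /qstar /wstar /rec2 /x_c /=.
move: (beta_c r y z c) (omega_c r y z c) hT => Bt Om.
move: (tau_c r y z c) => T hT.
field.
by rewrite hT hc hz.
Qed.
Section G.
Variable K : fieldType.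
Lemma mx2_mul0 (p q s t : K) (X : 'cV[K]_2) : (mx2 p q s t *m X) 0 0 = p * X 0 0 + q * X 1 0.
Proof. rewrite !mxE !big_ord_recr big_ord0 /= !mxE /= add0r; congr (_ * X _ _ + _ * X _ _); exact: val_inj. Qed.
Lemma mx2_mul1 (p q s t : K) (X : 'cV[K]_2) : (mx2 p q s t *m X) 1 0 = s * X 0 0 + t * X 1 0.
Proof. rewrite !mxE !big_ord_recr big_ord0 /= !mxE /= add0r; congr (_ * X _ _ + _ * X _ _); exact: val_inj. Qed.
Lemma col2_0 (p q : K) : col2 p q 0 0 = p. Proof. by rewrite mxE. Qed.
Lemma col2_1 (p q : K) : col2 p q 1 0 = q. Proof. by rewrite mxE. Qed.
End G.

Theorem lemma5 (R : realFieldType) (a b : R) (f : nat)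
  (ha0 : 0 < a) (ha1 : a < 1) (hb0 : 0 < b) (hb1 : b < 1) (hf : (3 <= f)%N) :
  let r := var_r R in let y := var_y R in let z := var_z R in
  let A := cst a in let Bc := cst b in
  let Q := mx2 (qstar r y z Bc 1) (wstar r y z Bc 1)
               (qstar r y z Bc 2) (wstar r y z Bc 2) in
  let B := mx2 ((Bc - A) / (1 - A)) ((1 - Bc) / (1 - A))
               ((Bc - A) / (1 - A) * beta_ab r y z A Bc - x_ab r y z A Bc)
               ((1 - Bc) / (1 - A) * beta_ab r y z A Bc) in
  let M := invmx Q *m B in
  forall j : nat, (1 <= j)%N ->
    qbar r y z A Bc f (f + j - 1) =
    (row2 (qstar r y z Bc j) (wstar r y z Bc j) *m M
       *m col2 (qstar r y z A f.-1) (qstar r y z A f)) 0 0.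
Proof.
move=> r y z A Bc Q B M j hj.
set v := col2 _ _.
set W := M *m v.
have hrow0 : forall (X : 'cV[RF R]_2) (p q : RF R), (row2 p q *m X) 0 0 = p * X 0 0 + q * X 1 0.
  by move=> X p q; rewrite !mxE !big_ord_recr big_ord0 /= !mxE /= add0r; congr (_ * X _ _ + _ * X _ _); exact: val_inj.
have hrow : forall p q : RF R, (row2 p q *m M *m v) 0 0 = p * W 0 0 + q * W 1 0.
  by move=> p q; rewrite -mulmxA hrow0.
have hT := @nz_tau R b. have hE := @nz_E R b hb0. have hz := nz_z R.
have hc := @nz_cst R b hb0.
have hdet : qstar r y z Bc 1 * wstar r y z Bc 2 - wstar r y z Bc 1 * qstar r y z Bc 2 != 0.
  by rewrite (@det_gen _ r y z Bc hT hc hz) oppr_eq0; exact: hE.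
have hQ : Q \in unitmx := @mx2_unit _ _ _ _ _ hdet.
have hQW : Q *m W = B *m v.
  by rewrite /W /M !mulmxA mulmxV // mul1mx.
have e0 := congr1 (fun X : 'cV[RF R]_2 => X 0 0) hQW.
have e1 := congr1 (fun X : 'cV[RF R]_2 => X 1 0) hQW.
rewrite /= /Q /B mx2_mul0 mx2_mul1 in e0 e1.
rewrite mx2_mul0 /v !col2_0 !col2_1 in e0.
rewrite mx2_mul1 /v !col2_0 !col2_1 in e1.
set qf := (1 - Bc) / (1 - A) * qstar r y z A f + (Bc - A) / (1 - A) * qstar r y z A f.-1.
set qf1 := beta_ab r y z A Bc * qf - x_ab r y z A Bc * qstar r y z A f.-1.
have hqb : forall k, qbar r y z A Bc f (f + k) = rec2 (beta_c r y z Bc) (x_c r y z Bc) qf qf1 k.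
  by move=> k; rewrite /qbar ifF ?addKn // ltnNge leq_addr.
case: j hj => [//|k] _.
rewrite addnS subn1 /= hqb hrow.
pose t := fun n => qstar r y z Bc n.+1 * W 0 0 + wstar r y z Bc n.+1 * W 1 0.
apply: (@rec_uniq _ (beta_c r y z Bc) (x_c r y z Bc) _ t).
- by move=> n; rewrite rec2S2.
- move=> n; rewrite /t /qstar /wstar !rec2S2; ring.
- rewrite /t /= /rec2 /= e0 /qf; ring.
- rewrite /t /= /rec2 /= e1 /qf1 /qf; ring.
Qed.
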